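(* For every positive integer $k$, every horizontal alternation of length $2k^4$ contains a monotone horizontal alternation of length at least $2k$.
   Context: A permutation $\pi$ contains $\sigma$ if $\pi$ has a subsequence in the same relative order as $\sigma$. A permutation $\pi$ is a horizontal alternation if there are no indices $i<j$ with $\pi_i$ odd and $\pi_j$ even (all even entries precede all odd entries). A monotone horizontal alternation is a horizontal alternation whose subsequence of odd entries and whose subsequence of even entries are each monotone (increasing or decreasing). *)

(* Defs.v *)
From mathcomp Require Import all_boot.
Set Implicit Arguments. Unset Strict Implicit. Unset Printing Implicit Defensive.

(* A permutation of length n is a sequence of naturals which is a
   rearrangement of 1, 2, ..., n (one-line notation, values 1-based so
   parity of entries is as in the paper). *)
Definition is_perm (s : seq nat) : Prop := perm_eq s (iota 1 (size s)).

Definition order_iso (s t : seq nat) : Prop :=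
  size s = size t /\
  forall i j, i < size s -> j < size s ->
    (nth 0 s i < nth 0 s j) = (nth 0 t i < nth 0 t j).

Definition contains (pi sigma : seq nat) : Prop :=
  exists m : bitseq, size m = size pi /\ order_iso (mask m pi) sigma.

Definition horiz_alt (pi : seq nat) : Prop :=
  is_perm pi /\
  forall i j, i < j -> j < size pi ->
    ~ (odd (nth 0 pi i) /\ ~~ odd (nth 0 pi j)).

Definition monotone (s : seq nat) : Prop := sorted ltn s \/ sorted gtn s.

Definition monotone_horiz_alt (pi : seq nat) : Prop :=
  horiz_alt pi /\ monotone [seq x <- pi | odd x] /\
  monotone [seq x <- pi | ~~ odd x].

(* Main.v *)
Require Import Defs.
From mathcomp Require Import all_boot zify.
From Stdlib Require Import Classical.
Set Implicit Arguments. Unset Strict Implicit. Unset Printing Implicit Defensive.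

Section ES.
Variables (T : eqType) (f : T -> nat).

Definition incr := fun a b => f a < f b.
Definition decr := fun a b => f b < f a.

Fixpoint lrm c (s : seq T) := if s is x :: s' then
  (if f x < c then x :: lrm (f x) s' else lrm c s') else [::].
Fixpoint nlrm c (s : seq T) := if s is x :: s' then
  (if f x < c then nlrm (f x) s' else x :: nlrm c s') else [::].

Lemma lrm_sorted c s : sorted decr (lrm c s) /\ all (fun u => f u < c) (lrm c s).
Proof.
elim: s c => //= x s IH c; case: ifP => // h.
have [H1 H2] := IH (f x); split => /=.
  case: (lrm (f x) s) H1 H2 => //= y l -> /andP[hh _]; by rewrite andbT.
rewrite h /=; apply/allP => u /(allP H2) /= hu; exact: ltn_trans hu h.
Qed.

Lemma lrm_subseq c s : subseq (lrm c s) s.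
Proof.
elim: s c => //= x s IH c; case: ifP => _; first by rewrite eqxx.
exact: subseq_trans (IH c) (subseq_cons _ _).
Qed.

Lemma nlrm_subseq c s : subseq (nlrm c s) s.
Proof.
elim: s c => //= x s IH c; case: ifP => _; last by rewrite eqxx.
exact: subseq_trans (IH _) (subseq_cons _ _).
Qed.

Lemma size_lrm c s : size (lrm c s) + size (nlrm c s) = size s.
Proof. elim: s c => //= x s IH c; case: ifP => _ /=; have := IH (f x); have := IH c; lia. Qed.

Lemma nlrm_key c s y t : subseq (y :: t) (nlrm c s) ->
  (exists z, subseq (z :: y :: t) s /\ f z <= f y) \/ (c <= f y /\ subseq (y :: t) s).
Proof.
elim: s c => [//|x s IH] c; rewrite [nlrm _ _]/=; case: ifP => hx.
  move=> /IH [[z [h1 h2]]|[h1 h2]].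
    left; exists z; split => //; exact: subseq_trans h1 (subseq_cons _ _).
  left; exists x; split => //; by rewrite [subseq _ _]/= eqxx.
rewrite [subseq _ _]/=; case: eqP => [->|ne].
  move=> hs; right; split; first by rewrite leqNgt hx.
  by rewrite [subseq _ _]/= eqxx; apply: subseq_trans hs (nlrm_subseq _ _).
move=> /IH [[z [h1 h2]]|[h1 h2]].
  left; exists z; split => //; exact: subseq_trans h1 (subseq_cons _ _).
right; split => //; exact: subseq_trans h2 (subseq_cons _ _).
Qed.

Lemma mirsky a b s : uniq s -> {in s &, injective f} ->
  (forall t, subseq t s -> sorted incr t -> size t <= a) ->
  (forall t, subseq t s -> sorted decr t -> size t <= b) -> size s <= a * b.
Proof.
elim: a s => [|a IH] s us inj hi hd.
  case: s us inj hi hd => // x s _ _ hi _.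
  have := hi [:: x]; rewrite sub1seq mem_head; by move=> /(_ isT erefl).
case: s us inj hi hd => // x s us inj hi hd.
have sR := nlrm_subseq (f x) s.
have sL := lrm_subseq (f x) s.
have [Ls La] := lrm_sorted (f x) s.
have hD : size (x :: lrm (f x) s) <= b.
  apply: hd; first by rewrite /= eqxx.
  case: (lrm (f x) s) Ls La => //= y l -> /andP[hh _]; by rewrite andbT.
have hR : size (nlrm (f x) s) <= a * b.
  apply: IH.
  - apply: subseq_uniq sR _; by case/andP: us.
  - move=> u v hu hv; apply: inj; rewrite inE; apply/orP; right; exact: (mem_subseq sR).
  - case=> // y t hs st.
    have [zz [h1 h2]] : exists z, subseq (z :: y :: t) (x :: s) /\ f z <= f y.
      case: (nlrm_key hs) => [[z [h1 h2]]|[h1 h2]].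
        exists z; split => //; exact: subseq_trans h1 (subseq_cons _ _).
      exists x; split => //=; by rewrite eqxx.
    have u1 := subseq_uniq h1 us.
    have hz : zz \in x :: s by apply: (mem_subseq h1); rewrite inE eqxx.
    have hy : y \in x :: s by apply: (mem_subseq h1); rewrite !inE eqxx orbT.
    have lt : f zz < f y.
      rewrite ltn_neqAle h2 andbT; apply/eqP => e.
      have := inj _ _ hz hy e => ez; move: u1; rewrite ez /= inE eqxx; by [].
    have := hi _ h1; rewrite /= /incr lt => /(_ st) /=; by rewrite ltnS.
  - move=> t ht; apply: hd; apply: subseq_trans ht _; exact: subseq_trans sR (subseq_cons _ _).
move: hD; rewrite /= -(size_lrm (f x) s) mulSn => hD; lia.
Qed.

Lemma ES s m : uniq s -> {in s &, injective f} -> m.-1 * m.-1 < size s ->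
  exists t, subseq t s /\ size t = m /\ (sorted incr t \/ sorted decr t).
Proof.
move=> us inj hs.
have : ~ ((forall t, subseq t s -> sorted incr t -> size t <= m.-1) /\
        (forall t, subseq t s -> sorted decr t -> size t <= m.-1)).
  move=> [h1 h2]; have := mirsky us inj h1 h2; rewrite leqNgt hs; by [].
move=> /not_and_or [] /not_all_ex_not [t H];
  have ht := not_imply_elim _ _ H; have H' := not_imply_elim2 _ _ H;
  have st := not_imply_elim _ _ H'; have := not_imply_elim2 _ _ H';
  move=> /negP; rewrite -ltnNge => {}H; clear H'.
- exists (take m t); split; first exact: subseq_trans (take_subseq _ _) ht.
  split; first by rewrite size_take; case: ifP => //; move: H; case: (m) => /= [|n] H; lia.
  left; apply: subseq_sorted (take_subseq _ _) st; rewrite /incr => p q r; exact: ltn_trans.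
- exists (take m t); split; first exact: subseq_trans (take_subseq _ _) ht.
  split; first by rewrite size_take; case: ifP => //; move: H; case: (m) => /= [|n] H; lia.
  right; apply: subseq_sorted (take_subseq _ _) st; rewrite /decr => p q r h1 h2; exact: ltn_trans h2 h1.
Qed.
End ES.


Lemma halfE x : 0 < x -> x = (x.-1./2).*2 + odd x.-1 + 1.
Proof. move=> hx; have := odd_double_half x.-1; lia. Qed.

Lemma map_index_uniq (s : seq nat) : uniq s -> map (index^~ s) s = iota 0 (size s).
Proof.
elim: s => //= x s IH /andP[nx us]; rewrite eqxx /=; congr cons.
rewrite -(addn0 1) iotaDl -IH // -map_comp; apply/eq_in_map => y ys /=.
case: (eqVneq x y) => [e|_]; last by rewrite add1n.
by move: nx; rewrite e ys.
Qed.

Lemma flat_iota s m : flatten [seq [:: j.*2.+1; j.*2.+2] | j <- iota s m] = iota (s.*2.+1) m.*2.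
Proof.
elim: m s => //= m IH s; rewrite IH doubleS /=; congr (_ :: _ :: _); by rewrite doubleS.
Qed.

Lemma idx_rel (r : rel nat) s i j : transitive r -> sorted r s -> i \in s -> j \in s ->
  ~~ r j i -> i != j -> index i s < index j s.
Proof.
move=> tr st hi hj nr ne; case: (ltngtP (index i s) (index j s)) => // h.
  by have := sorted_ltn_index tr st j i hj hi h; rewrite (negbTE nr).
by move: ne; rewrite -(nth_index 0 hi) h nth_index // eqxx.
Qed.
Lemma arith A B I J (ea eb : bool) : (A < B) = (I < J) -> (B < A) = (J < I) ->
  (A.*2 + ea + 1 < B.*2 + eb + 1) = (I.*2 + ea + 1 < J.*2 + eb + 1).
Proof.
rewrite -!addnn.
move=> e1 e2; case: (ltngtP A B) e1 e2 => l e1 e2.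
- have l2 : I < J by rewrite -e1.
  clear e1 e2.
  apply/idP/idP => _; case: ea; case: eb => /=; lia.
- have l2 : J < I by rewrite -e2.
  clear e1 e2.
  apply/idP/idP => H; exfalso; move: H; case: ea; case: eb => /=; lia.
- move: e1 e2; rewrite l; case: (ltngtP I J) => // -> _ _; by rewrite !ltn_add2r -!addnA !ltn_add2l.
Qed.

Lemma hh1 i : (i.*2.+1).-1./2 = i.
Proof. by rewrite -[(i.*2.+1).-1]/(false + i.*2) half_bit_double. Qed.
Lemma hh2 i : (i.*2.+2).-1./2 = i.
Proof. by rewrite -[(i.*2.+2).-1]/(true + i.*2) half_bit_double. Qed.


Section Constr.
Variables (pi t : seq nat) (n : nat).
Hypothesis ppi : is_perm pi.
Hypothesis hpi : forall i j, i < j -> j < size pi -> ~ (odd (nth 0 pi i) /\ ~~ odd (nth 0 pi j)).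
Hypothesis spi : size pi = n.*2.
Hypothesis st : sorted ltn t.
Hypothesis tn : all (fun i => i < n) t.

Definition g (par : bool) i := index (i.*2 + ~~ par + 1) pi.
Definition V := fun x : nat => (0 < x) && (x.-1./2 \in t).
Definition h x := (index x.-1./2 t).*2 + odd x.-1 + 1.

Lemma upi : uniq pi.
Proof. by rewrite (perm_uniq ppi) iota_uniq. Qed.

Lemma mempi x : (x \in pi) = (0 < x <= n.*2).
Proof. by rewrite (perm_mem ppi) mem_iota spi; lia. Qed.

Lemma ut : uniq t.
Proof. by move: st; rewrite ltn_sorted_uniq_leq => /andP[]. Qed.

Lemma idx_lt i j : i \in t -> j \in t -> (i < j) = (index i t < index j t).
Proof.
move=> hi hj; apply/idP/idP => h.
  apply: idx_rel ltn_trans st hi hj _ _; first by rewrite -leqNgt ltnW.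
  by rewrite neq_ltn h.
exact: (@sorted_ltn_index _ ltn ltn_trans t st i j hi hj h).
Qed.

Lemma h_mono a b : V a -> V b -> (a < b) = (h a < h b).
Proof.
move=> /andP[a0 ha] /andP[b0 hb]; rewrite {1}(halfE a0) {1}(halfE b0) /h.
apply: arith; [exact: idx_lt ha hb | exact: idx_lt hb ha].
Qed.

Lemma h_odd a : 0 < a -> odd (h a) = odd a.
Proof.
move=> a0; by rewrite {2}(halfE a0) /h !oddD !odd_double.
Qed.

Definition Vl := flatten [seq [:: i.*2.+1; i.*2.+2] | i <- t].

Lemma memVl x : (x \in Vl) = V x.
Proof.
apply/flatten_mapP/idP => [[i hi]|/andP[x0 hx]].
  rewrite !inE => /orP[]/eqP->; rewrite /V.
    by rewrite hh1 hi.
  by rewrite hh2 hi.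
exists x.-1./2 => //; rewrite {1}(halfE x0) !inE; case: (odd x.-1) => /=;
  apply/orP; [right|left]; apply/eqP; lia.
Qed.

Lemma mapVl : map h Vl = iota 1 (size t).*2.
Proof.
rewrite /Vl map_flatten -map_comp.
have -> : [seq (map h \o (fun i => [:: i.*2.+1; i.*2.+2])) i | i <- t] =
          [seq [:: j.*2.+1; j.*2.+2] | j <- map (index^~ t) t].
  rewrite -map_comp; apply/eq_map => i /=; rewrite /h hh1 hh2 /= odd_double /=.
  congr [:: _; _]; lia.
by rewrite map_index_uniq ?ut // flat_iota.
Qed.

Lemma uVl : uniq Vl.
Proof. apply: (@map_uniq _ _ h); rewrite mapVl iota_uniq //. Qed.

Lemma permV : perm_eq (filter V pi) Vl.
Proof.
apply: uniq_perm; first exact: filter_uniq upi.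
  exact: uVl.
move=> x; rewrite mem_filter memVl; case hV: (V x) => //=.
case/andP: hV => x0 /(allP tn) /= hlt; rewrite mempi x0 /=.
have := halfE x0; case: (odd x.-1) => /=; lia.
Qed.

Definition sigma := map h (filter V pi).

Lemma sig_perm : is_perm sigma /\ size sigma = (size t).*2.
Proof.
have P : perm_eq sigma (iota 1 (size t).*2) by rewrite /sigma -mapVl; apply: perm_map permV.
have S : size sigma = (size t).*2 by rewrite (perm_size P) size_iota.
by split => //; rewrite /is_perm S.
Qed.

Lemma sig_iso : order_iso (filter V pi) sigma.
Proof.
split; first by rewrite size_map.
move=> i j hi hj; rewrite !(nth_map 0) //; apply: h_mono.
  by have := mem_nth 0 hi; rewrite mem_filter => /andP[].
by have := mem_nth 0 hj; rewrite mem_filter => /andP[].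
Qed.

Definition Rh := fun a b : nat => ~~ (odd a && ~~ odd b).

Lemma sig_horiz i j : i < j -> j < size sigma -> ~ (odd (nth 0 sigma i) /\ ~~ odd (nth 0 sigma j)).
Proof.
have P1 : pairwise Rh pi.
  apply/(pairwiseP 0) => a b ha hb ab; apply/negP => /andP[o1 o2].
  exact: (hpi ab hb (conj o1 o2)).
have P2 : pairwise Rh (filter V pi) := subseq_pairwise (filter_subseq _ _) P1.
have P3 : pairwise Rh sigma.
  rewrite /sigma pairwise_map; apply: (sub_in_pairwise (P := V)) _ _ (filter_all V pi) P2.
  by move=> a b /andP[a0 _] /andP[b0 _]; rewrite /relpre /Rh /= !h_odd.
move=> ij hj [o1 o2]; move/(pairwiseP 0): P3 => /(_ i j (ltn_trans ij hj) hj ij).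
by rewrite /Rh o1 o2.
Qed.

Lemma idx_g a par : V a -> odd a == par -> index a pi = g par (a.-1./2).
Proof.
move=> /andP[a0 _]; have e := halfE a0.
have oa : odd a = ~~ odd a.-1 by move: a0; case: (a).
by move=> /eqP <-; rewrite /g oa negbK -e.
Qed.

Lemma sig_mono par : (sorted (relpre (g par) ltn) t \/ sorted (relpre (g par) gtn) t) ->
  monotone [seq x <- sigma | odd x == par].
Proof.
rewrite /sigma filter_map.
set y := filter _ (filter V pi).
set P := fun x => V x && (odd x == par).
have sy : subseq y pi := subseq_trans (filter_subseq _ _) (filter_subseq _ _).
have ay : all P y.
  apply/allP => x; rewrite !mem_filter => /andP[] /= hx /andP[hV _].
  by rewrite /P hV -h_odd //; case/andP: hV.
have ps : sorted (relpre (index^~ pi) ltn) pi.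
  by rewrite -sorted_map map_index_uniq ?upi // iota_ltn_sorted.
have ys : sorted (relpre (index^~ pi) ltn) y.
  apply: subseq_sorted sy ps => a b c /=; exact: ltn_trans.
have key : forall a b, P a -> P b -> index a pi < index b pi ->
   [/\ a.-1./2 \in t, b.-1./2 \in t, g par (a.-1./2) < g par (b.-1./2) ,
     h a = (index (a.-1./2) t).*2 + ~~ par + 1 & h b = (index (b.-1./2) t).*2 + ~~ par + 1].
  move=> a b /andP[Va pa] /andP[Vb pb]; rewrite (idx_g Va pa) (idx_g Vb pb) => lt.
  case/andP: (Va) => a0 ha; case/andP: (Vb) => b0 hb; split => //.
    have oa : odd a = ~~ odd a.-1 by move: a0; case: (a).
    by move: pa; rewrite oa => /eqP <-; rewrite negbK.
  have ob : odd b = ~~ odd b.-1 by move: b0; case: (b).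
  by move: pb; rewrite ob => /eqP <-; rewrite negbK.
case=> [inc|dec].
  left; rewrite sorted_map; apply: (sub_in_sorted (P := P)) ay ys.
  move=> a b Pa Pb /= lt; have [ha hb glt -> ->] := key a b Pa Pb lt.
  have : index (a.-1./2) t < index (b.-1./2) t.
    apply: idx_rel _ inc ha hb _ _.
    - by move=> u v w /=; apply: ltn_trans.
    - by rewrite /= -leqNgt ltnW.
    - by apply/eqP => e; move: glt; rewrite e ltnn.
  case: (~~ par) => /=; lia.
right; rewrite sorted_map; apply: (sub_in_sorted (P := P)) ay ys.
move=> a b Pa Pb /= lt; have [ha hb glt -> ->] := key a b Pa Pb lt.
have : index (b.-1./2) t < index (a.-1./2) t.
  apply: idx_rel _ dec hb ha _ _.
  - by move=> u v w /= h1 h2; apply: ltn_trans h2 h1.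
  - by rewrite /= -leqNgt ltnW.
  - by apply/eqP => e; move: glt; rewrite e ltnn.
case: (~~ par) => /=; lia.
Qed.

End Constr.


Theorem mainTheorem10 :
  forall (k : nat), 0 < k ->
  forall pi : seq nat, horiz_alt pi -> size pi = 2 * k ^ 4 ->
  exists sigma : seq nat,
    monotone_horiz_alt sigma /\ 2 * k <= size sigma /\ contains pi sigma.
Proof.
move=> k k0 pi [ppi hpi] spi0.
set n := k ^ 4.
have spi : size pi = n.*2 by rewrite spi0 mul2n.
have mp := @mempi pi [::] n ppi spi isT isT.
have injg : forall b, {in iota 0 n &, injective (g pi b)}.
  move=> b i j; rewrite !mem_iota /g => /andP[_ hi] /andP[_ hj] e.
  have xi : i.*2 + ~~ b + 1 \in pi by rewrite mp; case: (~~ b) => /=; lia.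
  have xj : j.*2 + ~~ b + 1 \in pi by rewrite mp; case: (~~ b) => /=; lia.
  have := nth_index 0 xi; rewrite e nth_index // => e2.
  move: e2; case: (~~ b) => /=; lia.
have K0 : 0 < k ^ 2 by rewrite expn_gt0 k0.
have [t1 [s1 [z1 d1]]] : exists t, subseq t (iota 0 n) /\ size t = k ^ 2 /\
   (sorted (incr (g pi false)) t \/ sorted (decr (g pi false)) t).
  apply: ES; first exact: iota_uniq.
    exact: injg.
  rewrite size_iota /n (_ : 4 = 2 * 2) // expnM.
  move: K0; case: (k ^ 2) => // K _ /=; nia.
have u1 : uniq t1 := subseq_uniq s1 (iota_uniq _ _).
have [t [s2 [z2 d2]]] : exists t, subseq t t1 /\ size t = k /\
   (sorted (incr (g pi true)) t \/ sorted (decr (g pi true)) t).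
  apply: ES => //.
    move=> i j hi hj; apply: injg; exact: (mem_subseq s1).
  rewrite z1; move: k0; case: (k) => // K _ /=; nia.
have s3 : subseq t (iota 0 n) := subseq_trans s2 s1.
have st : sorted ltn t := subseq_sorted ltn_trans s3 (iota_ltn_sorted _ _).
have tn : all (fun i => i < n) t.
  by apply/allP => i /(mem_subseq s3); rewrite mem_iota.
have dp : sorted (relpre (g pi false) ltn) t \/ sorted (relpre (g pi false) gtn) t.
  case: d1 => d1; [left|right]; apply: subseq_sorted s2 d1.
    by move=> a b c /=; apply: ltn_trans.
  by move=> a b c /= h1 h2; apply: ltn_trans h2 h1.
have dq : sorted (relpre (g pi true) ltn) t \/ sorted (relpre (g pi true) gtn) t.
  case: d2 => d2; [left|right]; [exact: d2|exact: d2].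
have [sp ss] := sig_perm ppi spi st tn.
exists (sigma pi t); split; last split.
- split; first split => //.
    move=> i j ij hj. exact: (sig_horiz hpi ij hj).
  split.
    have := sig_mono ppi spi st tn dq.
    by rewrite (@eq_filter _ (fun x => odd x == true) odd) // => x; rewrite eqb_id.
  have := sig_mono ppi spi st tn dp.
  by rewrite (@eq_filter _ (fun x => odd x == false) (fun x => ~~ odd x)) // => x; rewrite eqbF_neg.
- by rewrite ss z2 -mul2n.
- exists (map (V t) pi); split; first by rewrite size_map.
  rewrite -filter_mask; exact: sig_iso.
Qed.
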